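(* Let $\mathcal{M}=(l;\mathcal{V})$ and $\mathcal{M}'=(l';\mathcal{V}')$ be semi-parametric models over $\Omega\subseteq\mathbb{R}^d$. The following are equivalent: (a) $\mathcal{M}\sim\mathcal{M}'$; (b) for every finite $\mathcal{X}\subset\Omega$ unisolvent for both $\mathcal{V}$ and $\mathcal{V}'$ and every $\sigma^2>0$, the smoother matrices of $\mathcal{M}$ and $\mathcal{M}'$ at $\mathcal{X}$ are equal.
   Context: A semi-parametric model (SPM) over $\Omega$ is a pair $(l;\mathcal{V})$ with $\mathcal{V}=\{v_1,\ldots,v_m\}$ a finite (possibly empty) set of linearly independent functions on $\Omega$ and $l$ a symmetric function on $\Omega\times\Omega$ that is conditionally positive semi-definite w.r.t. $\mathcal{V}$. A finite $\mathcal{X}=\{x_1,\ldots,x_n\}\subset\Omega$ is unisolvent for $\mathcal{V}$ if the basis matrix $\mathbf{V}=[v_j(x_i)]_{i,j}$ has rank $m$; then $\mathbf{Q}$ denotes an orthonormal basis of its column span, $\mathbf{L}=[l(x_i,x_j)]$, $\widetilde{\mathbf{L}}=(\mathbf{I}-\mathbf{Q}\mathbf{Q}^\top)\mathbf{L}(\mathbf{I}-\mathbf{Q}\mathbf{Q}^\top)$, and conditional positive semi-definiteness means $\widetilde{\mathbf{L}}\succeq0$ for all such $\mathcal{X}$. The smoother matrix of the SPM at $\mathcal{X}$ with noise variance $\sigma^2$ is $\mathbf{M}=\mathbf{Q}\mathbf{Q}^\top+\widetilde{\mathbf{L}}(\widetilde{\mathbf{L}}+\sigma^2\mathbf{I})^{-1}$.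 Predictive mean and variance at $x$ given $\mathbf{y}\in\mathbb{R}^n$: $\mathbb{E}(f(x)\mid\mathbf{y})=(\mathbf{l}_{x,\mathcal{X}}\ \mathbf{v}_x)\mathbf{S}^{-1}\binom{\mathbf{y}}{\mathbf{0}}$, $\mathrm{Var}(f(x)\mid\mathbf{y})=l(x,x)-(\mathbf{l}_{x,\mathcal{X}}\ \mathbf{v}_x)\mathbf{S}^{-1}\binom{\mathbf{l}_{x,\mathcal{X}}^\top}{\mathbf{v}_x^\top}$, with $\mathbf{S}=\begin{pmatrix}\mathbf{L}+\sigma^2\mathbf{I}&\mathbf{V}\\ \mathbf{V}^\top&\mathbf{0}\end{pmatrix}$, $\mathbf{l}_{x,\mathcal{X}}=[l(x,x_i)]_i$, $\mathbf{v}_x=[v_j(x)]_j$. $\mathcal{M}\sim\mathcal{M}'$ (prediction-equivalent) means $|\mathcal{V}|=|\mathcal{V}'|$ and for every finite $\mathcal{X}\subset\Omega$ unisolvent for both, all $x\in\Omega$, $\mathbf{y}\in\mathbb{R}^{|\mathcal{X}|}$, $\sigma^2>0$, the predictive means are equal and the predictive variances are equal. *)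

(* Defs.v *)
From HB Require Import structures.
From mathcomp Require Import all_boot all_order all_algebra.
From mathcomp Require Import reals.
Set Implicit Arguments. Unset Strict Implicit. Unset Printing Implicit Defensive.
Import Order.TTheory GRing.Theory Num.Theory.
Local Open Scope ring_scope.

Section SPM.
Variables (R : realType) (d : nat).
Notation pt := 'rV[R]_d.

Definition lin_indep_on (Omega : pt -> Prop) (m : nat) (v : 'I_m -> pt -> R) :=
  forall c : 'I_m -> R,
    (forall w, Omega w -> \sum_(j < m) c j * v j w = 0) -> forall j, c j = 0.

Definition basis_mx n m (v : 'I_m -> pt -> R) (x : 'I_n -> pt) : 'M[R]_(n, m) :=
  \matrix_(i < n, j < m) v j (x i).

Definition kernel_mx n (l : pt -> pt -> R) (x : 'I_n -> pt) : 'M[R]_n :=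
  \matrix_(i < n, j < n) l (x i) (x j).

Definition finite_subset (Omega : pt -> Prop) n (x : 'I_n -> pt) :=
  injective x /\ forall i, Omega (x i).

Definition unisolvent n m (v : 'I_m -> pt -> R) (x : 'I_n -> pt) :=
  \rank (basis_mx v x) = m.

Definition orth_basis_of n m (Q V : 'M[R]_(n, m)) :=
  Q^T *m Q = 1%:M /\ (Q^T == V^T)%MS.

Definition Ltilde n m (Q : 'M[R]_(n, m)) (L : 'M[R]_n) : 'M[R]_n :=
  (1%:M - Q *m Q^T) *m L *m (1%:M - Q *m Q^T).

Definition psd n (A : 'M[R]_n) := forall z : 'cV[R]_n, 0 <= (z^T *m A *m z) 0 0.

Definition is_SPM (Omega : pt -> Prop) m (l : pt -> pt -> R) (v : 'I_m -> pt -> R) :=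
  lin_indep_on Omega v /\
  (forall a b, Omega a -> Omega b -> l a b = l b a) /\
  (forall n (x : 'I_n -> pt) (Q : 'M[R]_(n, m)),
     finite_subset Omega x -> unisolvent v x -> orth_basis_of Q (basis_mx v x) ->
     psd (Ltilde Q (kernel_mx l x))).

Definition smoother n m (Q : 'M[R]_(n, m)) (L : 'M[R]_n) (s2 : R) : 'M[R]_n :=
  Q *m Q^T + Ltilde Q L *m invmx (Ltilde Q L + s2%:M).

Definition S_mx n m (l : pt -> pt -> R) (v : 'I_m -> pt -> R) (x : 'I_n -> pt) (s2 : R)
  : 'M[R]_(n + m) :=
  block_mx (kernel_mx l x + s2%:M) (basis_mx v x) (basis_mx v x)^T 0.

Definition lv_row n m (l : pt -> pt -> R) (v : 'I_m -> pt -> R) (x : 'I_n -> pt) (w : pt)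
  : 'rV[R]_(n + m) :=
  row_mx (\row_(i < n) l w (x i)) (\row_(j < m) v j w).

Definition pred_mean n m l (v : 'I_m -> pt -> R) (x : 'I_n -> pt) (s2 : R) (y : 'cV[R]_n)
  (w : pt) : R :=
  (lv_row l v x w *m invmx (S_mx l v x s2) *m col_mx y (0 : 'cV[R]_m)) 0 0.

Definition pred_var n m l (v : 'I_m -> pt -> R) (x : 'I_n -> pt) (s2 : R) (w : pt) : R :=
  l w w - (lv_row l v x w *m invmx (S_mx l v x s2) *m (lv_row l v x w)^T) 0 0.

Definition pred_equiv (Omega : pt -> Prop) m (l : pt -> pt -> R) (v : 'I_m -> pt -> R)
  m' (l' : pt -> pt -> R) (v' : 'I_m' -> pt -> R) :=
  m = m' /\
  forall n (x : 'I_n -> pt), finite_subset Omega x -> unisolvent v x -> unisolvent v' x ->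
  forall (w : pt), Omega w -> forall (y : 'cV[R]_n) (s2 : R), 0 < s2 ->
    pred_mean l v x s2 y w = pred_mean l' v' x s2 y w /\
    pred_var l v x s2 w = pred_var l' v' x s2 w.

End SPM.

(* Main.v *)
Require Import Defs.
From HB Require Import structures.
From mathcomp Require Import all_boot all_order all_algebra.
From mathcomp Require Import reals.
From mathcomp Require Import ring lra.
From Stdlib Require Import Classical.
Import Order.TTheory GRing.Theory Num.Theory.
Local Open Scope ring_scope.
Set Implicit Arguments. Unset Strict Implicit. Unset Printing Implicit Defensive.

Section Basic.
Variable R : realType.

Lemma dot_ge0 n (z : 'cV[R]_n) : 0 <= (z^T *m z) 0 0.
Proof.
rewrite mxE; apply: sumr_ge0 => i _; rewrite mxE -expr2; exact: sqr_ge0.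
Qed.

Lemma dot_eq0 n (z : 'cV[R]_n) : (z^T *m z) 0 0 = 0 -> z = 0.
Proof.
rewrite mxE => h.
have h2 : forall i, z i 0 = 0.
  move=> i; have hp : forall k : 'I_n, true -> 0 <= z^T 0 k * z k 0.
    by move=> k _; rewrite mxE -expr2 sqr_ge0.
  have := @psumr_eq0P R _ xpredT (fun i => z^T 0 i * z i 0) hp h i isT.
  by rewrite mxE => /eqP; rewrite mulf_eq0 orbb => /eqP.
by apply/matrixP => i j; rewrite ord1 h2 mxE.
Qed.

Lemma subB_sub m1 m2 n (A B : 'M[R]_(m1, n)) (C : 'M[R]_(m2, n)) :
  (A <= C)%MS -> (B <= C)%MS -> (A - B <= C)%MS.
Proof.
move=> hA hB; apply: addmx_sub => //; rewrite -scaleN1r; exact: scalemx_sub.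
Qed.

Lemma exists_orth n m (V : 'M[R]_(n, m)) : \rank V = m ->
  exists Q : 'M[R]_(n, m), orth_basis_of Q V.
Proof.
elim: m V => [|m IH] V hV.
  exists 0; split; first by apply/matrixP => i []; case: i.
  by rewrite [V^T]flatmx0 [0^T]flatmx0 /= submx_refl.
have [v [V1 eV]] : exists (v : 'M[R]_(n, 1)) (V1 : 'M[R]_(n, m)),
    V = row_mx v V1 :> 'M_(n, 1 + m).
  by exists (lsubmx (V : 'M_(n, 1 + m))), (rsubmx (V : 'M_(n, 1 + m))); rewrite hsubmxK.
suff : exists Q : 'M[R]_(n, 1 + m), orth_basis_of Q (row_mx v V1) by rewrite eV.
have {}hV : \rank (row_mx v V1) = 1 + m by rewrite -eV.
clear eV V.
have hVT : ((row_mx v V1)^T :=: v^T + V1^T)%MS by rewrite tr_row_mx; apply: eqmx_sym; apply: addsmxE.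
have hV1 : \rank V1 = m.
  apply/eqP; rewrite eqn_leq rank_leq_col /=.
  have := mxrank_adds_leqif v^T V1^T; rewrite -hVT mxrank_tr hV => [[h _]].
  have h1 := rank_leq_row v^T; rewrite !mxrank_tr in h h1.
  by rewrite -(leq_add2l 1); apply: leq_trans h (leq_add h1 (leqnn _)).
have [Q1 [hQQ hQV]] := IH V1 hV1.
set r := v - Q1 *m (Q1^T *m v).
have hQr : Q1^T *m r = 0 by rewrite mulmxBr !mulmxA hQQ mul1mx subrr.
have hQ1V1 : (Q1^T <= V1^T)%MS by case/andP: hQV.
have hV1Q1 : (V1^T <= Q1^T)%MS by case/andP: hQV.
have hr0 : r != 0.
  apply/eqP => r0.
  have ev : v = Q1 *m (Q1^T *m v) by apply/eqP; rewrite -subr_eq0 -/r r0.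
  have : (v^T <= V1^T)%MS.
    by rewrite ev trmx_mul; apply: submx_trans (submxMl _ _) hQ1V1.
  move=> hv; have : ((row_mx v V1)^T <= V1^T)%MS.
    by rewrite hVT addsmx_sub hv submx_refl.
  by move/mxrankS; rewrite !mxrank_tr hV hV1 ltnn.
set nr := (r^T *m r) 0 0.
have nr_gt0 : 0 < nr.
  rewrite lt_def dot_ge0 andbT; apply/eqP => /dot_eq0 h; by rewrite h eqxx in hr0.
set c := (Num.sqrt nr)^-1.
have sq_gt0 : 0 < Num.sqrt nr by rewrite sqrtr_gt0.
have c2 : c * c * nr = 1.
  by rewrite /c -expr2 exprVn sqr_sqrtr ?mulVf // ?gt_eqF // ltW.
set q := c *: r.
exists (row_mx q Q1); split.
  rewrite tr_row_mx mul_col_row.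
  have e1 : q^T *m q = 1%:M.
    have eT : (c *: r)^T = c *: r^T by apply/matrixP => i j; rewrite !mxE.
    rewrite /q eT -scalemxAl -scalemxAr scalerA.
    by rewrite [r^T *m r]mx11_scalar -/nr scale_scalar_mx c2.
  have e2 : Q1^T *m q = 0 by rewrite /q -scalemxAr hQr scaler0.
  have e3 : q^T *m Q1 = 0 by rewrite -(trmxK Q1) -trmx_mul e2 trmx0.
  by rewrite e1 e2 e3 hQQ -scalar_mx_block.
have er : r^T = v^T - v^T *m Q1 *m Q1^T.
  by rewrite /r linearB /= !trmx_mul trmxK.
rewrite !tr_row_mx; apply/andP; split.
  rewrite col_mx_sub -addsmxE; apply/andP; split.
    have eT : (c *: r)^T = c *: r^T by apply/matrixP => i j; rewrite !mxE.
    rewrite /q eT; apply: scalemx_sub; rewrite er.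
    apply: subB_sub; first exact: addsmxSl.
    apply: submx_trans (submxMl _ _) _; exact: submx_trans hQ1V1 (addsmxSr _ _).
  rewrite -addsmxE; exact: submx_trans hQ1V1 (addsmxSr _ _).
rewrite col_mx_sub -!addsmxE; apply/andP; split; last first.
  exact: submx_trans hV1Q1 (addsmxSr _ _).
have ev : v^T = (Num.sqrt nr) *: q^T + v^T *m Q1 *m Q1^T.
  have eT : (c *: r)^T = c *: r^T by apply/matrixP => i j; rewrite !mxE.
  rewrite /q eT scalerA /c mulfV ?gt_eqF // scale1r er.
  by rewrite subrK.
rewrite ev; apply: addmx_sub; first by apply: scalemx_sub; exact: addsmxSl.
apply: submx_trans (submxMl _ _) _; exact: addsmxSr.
Qed.
Lemma unit_of_inj k (A : 'M[R]_k) :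
  (forall t : 'cV[R]_k, A^T *m t = 0 -> t = 0) -> A \in unitmx.
Proof.
move=> h; rewrite -row_free_unit; apply: inj_row_free => u hu.
have := h u^T; rewrite -trmx_mul hu trmx0 => /(_ erefl) h0.
by rewrite -[u]trmxK h0 trmx0.
Qed.

Lemma psd_tr k (K : 'M[R]_k) : psd K -> psd K^T.
Proof.
move=> h z; have := h z.
suff -> : (z^T *m K^T *m z) 0 0 = (z^T *m K *m z) 0 0 by [].
have e : (z^T *m K^T *m z)^T = z^T *m K *m z by rewrite !trmx_mul !trmxK mulmxA.
by rewrite -e [RHS]mxE.
Qed.

Lemma psd_inj k (K : 'M[R]_k) s2 (a : 'cV[R]_k) : psd K -> 0 < s2 ->
  (K + s2%:M) *m a = 0 -> a = 0.
Proof.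
move=> hK hs ha; apply: dot_eq0.
have : (a^T *m ((K + s2%:M) *m a)) 0 0 = 0 by rewrite ha mulmx0 mxE.
rewrite mulmxDl mulmxDr mul_scalar_mx -scalemxAr mxE [in X in _ + X]mxE mulmxA.
move=> h; have hk := hK a; have hd := dot_ge0 a.
have h2 : s2 * (a^T *m a) 0 0 = - (a^T *m K *m a) 0 0.
  by apply/eqP; rewrite -addr_eq0 addrC h.
have h3 : s2 * (a^T *m a) 0 0 <= 0 by rewrite h2 oppr_le0.
by apply/eqP; rewrite eq_le hd andbT -(pmulr_rle0 _ hs).
Qed.
End Basic.

Section Core.
Variables (R : realType) (n m : nat) (L : 'M[R]_n) (V Q : 'M[R]_(n, m)) (s2 : R).
Hypotheses (hQ : orth_basis_of Q V) (hrk : \rank V = m)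
  (hpsd : psd (Ltilde Q L)) (hs2 : 0 < s2).

Definition P := Q *m Q^T.
Definition Pc : 'M[R]_n := 1%:M - P.

Lemma QtQ : Q^T *m Q = 1%:M. Proof. by case: hQ. Qed.

Lemma PcT : Pc^T = Pc.
Proof. by rewrite /Pc linearB /= trmx1 /P trmx_mul trmxK. Qed.

Lemma PcP : Pc *m P = 0.
Proof.
by rewrite /Pc /P mulmxBl mul1mx !mulmxA -(mulmxA Q) QtQ mulmx1 subrr.
Qed.

Lemma Pc2 : Pc *m Pc = Pc.
Proof. by rewrite {1}/Pc mulmxBr mulmx1 PcP subr0. Qed.

Lemma PV : P *m V = V.
Proof.
have : (V^T <= Q^T)%MS by case: hQ => _ /andP[].
case/submxP => D hD.
by rewrite -[V]trmxK hD trmx_mul trmxK /P -!mulmxA (mulmxA Q^T) QtQ mul1mx.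
Qed.

Lemma PcV : Pc *m V = 0.
Proof. by rewrite /Pc mulmxBl mul1mx PV subrr. Qed.

Lemma Pc_ker k (a : 'M[R]_(n, k)) : V^T *m a = 0 -> Pc *m a = a.
Proof.
have : (Q^T <= V^T)%MS by case: hQ => _ /andP[].
case/submxP => D hD ha.
by rewrite /Pc mulmxBl mul1mx /P -mulmxA hD -mulmxA ha !mulmx0 subr0.
Qed.

Lemma LtE (L0 : 'M[R]_n) : Ltilde Q L0 = Pc *m L0 *m Pc. Proof. by []. Qed.

Lemma S_inj_gen (L0 : 'M[R]_n) : psd (Ltilde Q L0) ->
  forall t : 'cV[R]_(n + m), block_mx (L0 + s2%:M) V V^T 0 *m t = 0 -> t = 0.
Proof.
move=> hp t; rewrite -[t](vsubmxK t); set a := usubmx t; set b := dsubmx t.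
rewrite mul_block_col => /eqP; rewrite col_mx_eq0 => /andP[/eqP h1 /eqP h2].
rewrite mul0mx addr0 in h2.
have hPa := Pc_ker h2.
have ha : a = 0.
  apply: (@psd_inj _ _ (Ltilde Q L0) s2) => //.
  have e1 : (Ltilde Q L0 + s2%:M) *m a = Pc *m (L0 *m a) + s2 *: a.
    by rewrite LtE mulmxDl -!mulmxA hPa mul_scalar_mx.
  have e2 : Pc *m ((L0 + s2%:M) *m a + V *m b) = Pc *m (L0 *m a) + s2 *: a.
    by rewrite mulmxDr (mulmxDl L0) mulmxDr (mulmxA Pc V) PcV mul0mx addr0 mul_scalar_mx -scalemxAr hPa.
  by rewrite e1 -e2 h1 mulmx0.
rewrite ha mulmx0 add0r in h1.
have hb : b = 0.
  have rf : row_free V^T by rewrite /row_free mxrank_tr hrk.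
  apply/trmx_inj; rewrite trmx0; apply: (row_free_inj rf).
  by rewrite /= -trmx_mul h1 trmx0 mul0mx.
by rewrite ha hb col_mx0.
Qed.

Definition Smat := block_mx (L + s2%:M) V V^T 0.

Lemma LtT (L0 : 'M[R]_n) : Ltilde Q L0^T = (Ltilde Q L0)^T.
Proof. by rewrite !LtE !trmx_mul PcT mulmxA. Qed.

Lemma S_unit : Smat \in unitmx.
Proof.
apply: unit_of_inj => t; rewrite /Smat tr_block_mx trmxK linearD /= tr_scalar_mx trmx0.
apply: S_inj_gen; rewrite LtT; exact: psd_tr.
Qed.

Definition Bmat := Ltilde Q L + s2%:M.

Lemma B_unit : Bmat \in unitmx.
Proof.
apply: unit_of_inj => t; rewrite /Bmat linearD /= tr_scalar_mx.
apply: psd_inj => //; exact: psd_tr.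
Qed.

Definition Zmat := invmx Smat *m col_mx 1%:M 0.
Definition alpha := usubmx Zmat.
Definition beta := dsubmx Zmat.

Lemma SZ : Smat *m Zmat = col_mx 1%:M 0.
Proof. by rewrite /Zmat mulmxA mulmxV ?S_unit // mul1mx. Qed.

Lemma Zeqs : (L + s2%:M) *m alpha + V *m beta = 1%:M /\ V^T *m alpha = 0.
Proof.
have := SZ; rewrite -[Zmat]vsubmxK /Smat mul_block_col mul0mx addr0.
by case/eq_col_mx.
Qed.

Lemma alphaE : alpha = invmx Bmat *m Pc.
Proof.
have [h1 h2] := Zeqs.
have hPa := Pc_ker h2.
have : Bmat *m alpha = Pc.
  have e1 : Bmat *m alpha = Pc *m (L *m alpha) + s2 *: alpha.
    by rewrite /Bmat LtE mulmxDl -!mulmxA hPa mul_scalar_mx.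
  have := congr1 (mulmx Pc) h1.
  rewrite mulmxDr (mulmxDl L) mulmxDr (mulmxA Pc V) PcV mul0mx addr0 mul_scalar_mx.
  by rewrite -scalemxAr hPa mulmx1 e1.
by move=> <-; rewrite mulKmx ?B_unit.
Qed.

Lemma smootherE : smoother Q L s2 = 1%:M - s2 *: alpha.
Proof.
rewrite /smoother alphaE -/Bmat.
have hB := B_unit.
have e1 : Ltilde Q L *m invmx Bmat = 1%:M - s2 *: invmx Bmat.
  have -> : Ltilde Q L = Bmat - s2%:M by rewrite /Bmat addrK.
  by rewrite mulmxBl mulmxV // mul_scalar_mx.
have e2 : invmx Bmat *m P = s2^-1 *: P.
  have hBP : Bmat *m P = s2 *: P.
    by rewrite /Bmat mulmxDl LtE -mulmxA PcP mulmx0 add0r mul_scalar_mx.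
  have := congr1 (mulmx (invmx Bmat)) hBP; rewrite mulKmx // -scalemxAr => hh.
  by rewrite [in RHS]hh scalerA mulVf ?gt_eqF // scale1r.
rewrite e1 /Pc mulmxBr mulmx1 e2 scalerBr scalerA mulfV ?gt_eqF // scale1r.
by rewrite /P opprB addrCA addrA.
Qed.

Lemma alpha_ker k (W : 'M[R]_(n, k)) : alpha *m W = 0 -> (W^T <= V^T)%MS.
Proof.
move=> hW; have [h1 _] := Zeqs.
have := congr1 (mulmx^~ W) h1; rewrite /= mulmxDl mul1mx -mulmxA hW mulmx0 add0r.
move=> <-; rewrite -mulmxA trmx_mul; exact: submxMl.
Qed.

Lemma alpha_V : alpha *m V = 0.
Proof. by rewrite alphaE -mulmxA PcV mulmx0. Qed.

Lemma topS : row_mx (L + s2%:M) V *m invmx Smat = row_mx 1%:M 0.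
Proof.
have := mulmxV S_unit; rewrite {1}/Smat block_mxEv mul_col_mx.
rewrite [1%:M](scalar_mx_block n m) block_mxEv.
by case/eq_col_mx.
Qed.

Lemma leftS : invmx Smat *m col_mx (L + s2%:M) V^T = col_mx 1%:M 0.
Proof.
have := mulVmx S_unit; rewrite {2}/Smat block_mxEh mul_mx_row.
rewrite [1%:M](scalar_mx_block n m) block_mxEh.
by case/eq_row_mx.
Qed.

Lemma pdE : row_mx L V *m invmx Smat *m col_mx 1%:M 0 = 1%:M - s2 *: alpha.
Proof.
have -> : row_mx L V = row_mx (L + s2%:M) V - s2 *: row_mx 1%:M 0.
  by rewrite scale_row_mx scaler0 opp_row_mx add_row_mx scalemx1 addrK oppr0 addr0.
rewrite mulmxBl topS -scalemxAl mulmxBl -scalemxAl -mulmxA -/Zmat.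
rewrite mul_row_col mul1mx mul0mx addr0.
by rewrite -[Zmat]vsubmxK mul_row_col mul1mx mul0mx addr0.
Qed.

Lemma varE : L^T = L ->
  row_mx L V *m invmx Smat *m (row_mx L V)^T = L - s2 *: (1%:M - s2 *: alpha).
Proof.
move=> hL.
have -> : (row_mx L V)^T = col_mx (L + s2%:M) V^T - s2 *: col_mx 1%:M 0.
  by rewrite tr_row_mx hL scale_col_mx scaler0 opp_col_mx add_col_mx scalemx1 addrK oppr0 addr0.
rewrite -mulmxA mulmxBr leftS -scalemxAr -/Zmat mulmxBr -scalemxAr.
rewrite -pdE !mulmxA mul_row_col mulmx1 mulmx0 addr0.
done.
Qed.

End Core.

Section Aug.
Variables (R : realType) (n m : nat) (L : 'M[R]_n) (V : 'M[R]_(n, m)) (s2 : R).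
Variables (a : 'cV[R]_n) (r : 'rV[R]_m) (c : R).

Let L' : 'M[R]_(n + 1) := block_mx L a a^T c%:M.
Let V' : 'M[R]_(n + 1, m) := col_mx V r.
Let b : 'cV[R]_(n + m) := col_mx a r^T.

Hypotheses (hS : Smat L V s2 \in unitmx) (hS' : Smat L' V' s2 \in unitmx).

Let z := invmx (Smat L V s2) *m b.
Let s := c + s2 - (b^T *m z) 0 0.
Let E : 'cV[R]_(n + 1) := col_mx 0 1%:M.

Lemma aug_main : col_mx (- usubmx z) 1%:M = s *: (alpha L' V' s2 *m E).
Proof.
set zu := usubmx z; set zd := dsubmx z.
have ez : z = col_mx zu zd by rewrite vsubmxK.
set t : 'cV[R]_(n + 1 + m) := col_mx (col_mx (- zu) 1%:M) (- zd).
have hz : Smat L V s2 *m z = b by rewrite /z mulmxA mulmxV // mul1mx.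
move: hz; rewrite ez /Smat mul_block_col mul0mx addr0 => /eq_col_mx [h1 h2].
have hs : s%:M = (c + s2)%:M - (a^T *m zu + r *m zd).
  rewrite /s ez /b tr_col_mx trmxK mul_row_col [a^T *m zu + _]mx11_scalar.
  by rewrite mxE eqxx mulr1n raddfB.
have St : Smat L' V' s2 *m t = s *: col_mx (col_mx 0 1%:M) 0.
  rewrite /Smat /L' /V' /t [s2%:M](scalar_mx_block n 1) add_block_mx.
  rewrite mul_block_col mul_block_col tr_col_mx mul_row_col mul_col_mx.
  rewrite scale_col_mx scale_col_mx scalemx1 add_col_mx !addr0 !scaler0 !mulmx1 !mulmxN.
  rewrite mul0mx subr0.
  congr col_mx; last by rewrite h2 addNr.
  congr col_mx.
    by rewrite -h1 addKr subrr.
  by rewrite hs; apply/matrixP => i j; rewrite !mxE; ring.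
have ht : t = s *: (Zmat L' V' s2 *m E).
  have := congr1 (mulmx (invmx (Smat L' V' s2))) St; rewrite mulKmx // => ->.
  by rewrite -scalemxAr /Zmat -mulmxA mul_col_mx mul1mx mul0mx.
have := congr1 usubmx ht; rewrite col_mxKu /alpha => ->.
by rewrite mul_usub_mx; apply/matrixP => i j; rewrite !mxE.
Qed.
Lemma Smat_sym : L^T = L -> (Smat L V s2)^T = Smat L V s2.
Proof.
by move=> hL; rewrite /Smat tr_block_mx trmxK linearD /= tr_scalar_mx hL trmx0.
Qed.

Lemma aug_pred (hL : L^T = L) (y : 'cV[R]_n) :
  let g := alpha L' V' s2 *m E in
  (b^T *m invmx (Smat L V s2) *m col_mx y 0) 0 0
    = - ((((dsubmx g) 0 0)^-1 *: usubmx g)^T *m y) 0 0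
  /\ c - (b^T *m invmx (Smat L V s2) *m b) 0 0 = ((dsubmx g) 0 0)^-1 - s2.
Proof.
move=> g; have h := aug_main; rewrite -/g in h.
have hd := congr1 (fun M => (dsubmx M) 0 0) h; rewrite /= col_mxKd in hd.
have hds : s * (dsubmx g) 0 0 = 1.
  by move: hd; rewrite !mxE eqxx mulr1n => <-.
have gnz : (dsubmx g) 0 0 != 0 by apply/eqP => g0; move: hds; rewrite g0 mulr0 => /eqP; rewrite eq_sym oner_eq0.
have hs : s = ((dsubmx g) 0 0)^-1.
  by apply: (mulIf gnz); rewrite hds mulVf.
have hu := congr1 usubmx h; rewrite col_mxKu in hu.
have hu' : usubmx z = - (s *: usubmx g).
  by apply: oppr_inj; rewrite opprK hu; apply/matrixP => i j; rewrite !mxE.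
split; last first.
  by rewrite -mulmxA -/z -hs /s addrAC addrK.
have -> : b^T *m invmx (Smat L V s2) = z^T.
  by rewrite /z trmx_mul trmx_inv Smat_sym.
rewrite -[z]vsubmxK tr_col_mx mul_row_col mulmx0 addr0 hu' hs.
by rewrite linearN /= mulNmx [LHS]mxE.
Qed.

End Aug.

Definition ext (R : realType) d n (x : 'I_n -> 'rV[R]_d) (w : 'rV[R]_d) : 'I_(n + 1) -> 'rV[R]_d :=
  fun i => match split i with inl j => x j | inr _ => w end.

Lemma entry_row_row (R : realType) n p (A C : 'M[R]_(n, p)) k :
  (row k A *m (row k C)^T) 0 0 = (A *m C^T) k k.
Proof. by rewrite !mxE; apply: eq_bigr => j _; rewrite !mxE. Qed.

Lemma entry_row_col (R : realType) n p q (A : 'M[R]_(n, p)) (B : 'M[R]_(p, q)) k j :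
  (row k A *m B) 0 j = (A *m B) k j.
Proof. by rewrite -row_mul mxE. Qed.

Lemma mul_delta_entry (R : realType) n (A : 'M[R]_n) i j :
  (A *m delta_mx j (0 : 'I_1)) i 0 = A i j.
Proof.
rewrite mxE (bigD1 j) //= mxE !eqxx mulr1 big1 ?addr0 // => k hk.
by rewrite mxE (negbTE hk) mulr0.
Qed.

Section Model.
Variables (R : realType) (d : nat) (Omega : 'rV[R]_d -> Prop) (m : nat)
  (l : 'rV[R]_d -> 'rV[R]_d -> R) (v : 'I_m -> 'rV[R]_d -> R).
Hypothesis hM : is_SPM Omega l v.

Lemma ker_sym n (x : 'I_n -> 'rV[R]_d) : finite_subset Omega x ->
  (kernel_mx l x)^T = kernel_mx l x.
Proof.
case: hM => _ [hs _] [_ hx]; apply/matrixP => i j; rewrite !mxE; exact: hs.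
Qed.

Lemma model_Q n (x : 'I_n -> 'rV[R]_d) : finite_subset Omega x -> unisolvent v x ->
  exists Q, orth_basis_of Q (basis_mx v x).
Proof. by move=> _ hu; apply: exists_orth. Qed.

Lemma model_psd n (x : 'I_n -> 'rV[R]_d) Q : finite_subset Omega x -> unisolvent v x ->
  orth_basis_of Q (basis_mx v x) -> psd (Ltilde Q (kernel_mx l x)).
Proof. by case: hM => _ [_ h] hx hu hQ; apply: h. Qed.

Lemma model_unit n (x : 'I_n -> 'rV[R]_d) s2 : finite_subset Omega x -> unisolvent v x ->
  0 < s2 -> S_mx l v x s2 \in unitmx.
Proof.
move=> hx hu hs; have [Q hQ] := model_Q hx hu.
exact: (S_unit hQ hu (model_psd hx hu hQ) hs).
Qed.

Lemma lv_row_pt n (x : 'I_n -> 'rV[R]_d) k :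
  lv_row l v x (x k) = row k (row_mx (kernel_mx l x) (basis_mx v x)).
Proof.
rewrite row_row_mx /lv_row; congr row_mx; apply/matrixP => i j; rewrite !mxE //.
Qed.

Lemma pm_pt n (x : 'I_n -> 'rV[R]_d) s2 y k : finite_subset Omega x -> unisolvent v x ->
  0 < s2 ->
  pred_mean l v x s2 y (x k) =
  ((1%:M - s2 *: alpha (kernel_mx l x) (basis_mx v x) s2) *m y) k 0.
Proof.
move=> hx hu hs; have [Q hQ] := model_Q hx hu.
rewrite /pred_mean lv_row_pt -mulmxA entry_row_col.
have -> : col_mx y (0 : 'cV[R]_m) = col_mx 1%:M 0 *m y by rewrite mul_col_mx mul1mx mul0mx.
rewrite !mulmxA -(pdE hQ hu (model_psd hx hu hQ) hs) //.
Qed.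

Lemma pv_pt n (x : 'I_n -> 'rV[R]_d) s2 k : finite_subset Omega x -> unisolvent v x ->
  0 < s2 ->
  pred_var l v x s2 (x k) =
  s2 * (1%:M - s2 *: alpha (kernel_mx l x) (basis_mx v x) s2) k k.
Proof.
move=> hx hu hs; have [Q hQ] := model_Q hx hu.
rewrite /pred_var lv_row_pt -row_mul entry_row_row.
rewrite (varE hQ hu (model_psd hx hu hQ) hs (ker_sym hx)).
move: (1%:M - _) => M.
by rewrite !mxE opprB addrC subrK.
Qed.

Lemma ext_fs n (x : 'I_n -> 'rV[R]_d) w : finite_subset Omega x -> Omega w ->
  (forall k, x k <> w) -> finite_subset Omega (ext x w).
Proof.
move=> [hi hx] hw hn; split; last first.
  by move=> i; rewrite /ext; case: (split i).
move=> i j; rewrite /ext.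
case: splitP => [i' ei|i' ei]; case: splitP => [j' ej|j' ej].
- by move/hi => e; apply: val_inj; rewrite /= ei ej e.
- by move/hn.
- by move=> e; move: (hn j'); rewrite e.
- by move=> _; apply: val_inj; rewrite /= ei ej !ord1.
Qed.

Lemma kernel_ext n (x : 'I_n -> 'rV[R]_d) w :
  kernel_mx l (ext x w) =
  block_mx (kernel_mx l x) (\col_i l (x i) w) (\row_j l w (x j)) (l w w)%:M.
Proof.
apply/matrixP => i j; rewrite block_mxEv !mxE /ext.
case: (split i) => i'; rewrite !mxE; case: (split j) => j'; rewrite !mxE //.
by rewrite !ord1 eqxx mulr1n.
Qed.

Lemma ext_fs_unis n (x : 'I_n -> 'rV[R]_d) w : unisolvent v x -> unisolvent v (ext x w).
Proof.
rewrite /unisolvent => hu.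
have -> : basis_mx v (ext x w) = col_mx (basis_mx v x) (\row_j v j w).
  apply/matrixP => i j; rewrite !mxE /ext.
  by case: (split i) => i'; rewrite !mxE.
apply/eqP; rewrite eqn_leq rank_leq_col /= -{1}hu.
by apply: mxrankS; rewrite -addsmxE addsmxSl.
Qed.

Lemma basis_ext n (x : 'I_n -> 'rV[R]_d) w :
  basis_mx v (ext x w) = col_mx (basis_mx v x) (\row_j v j w).
Proof.
apply/matrixP => i j; rewrite !mxE /ext.
by case: (split i) => i'; rewrite !mxE.
Qed.

Lemma pred_ext n (x : 'I_n -> 'rV[R]_d) w s2 y : finite_subset Omega x -> unisolvent v x ->
  Omega w -> (forall k, x k <> w) -> 0 < s2 ->
  let g := alpha (kernel_mx l (ext x w)) (basis_mx v (ext x w)) s2 *m col_mx 0 1%:M in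
  pred_mean l v x s2 y w = - (((dsubmx g 0 0)^-1 *: usubmx g)^T *m y) 0 0 /\
  pred_var l v x s2 w = (dsubmx g 0 0)^-1 - s2.
Proof.
move=> hx hu hw hn hs g.
have hx' := ext_fs hx hw hn.
have hu' := ext_fs_unis w hu.
have hU := model_unit hx hu hs.
have hU' := model_unit hx' hu' hs.
have hsym : \row_j l w (x j) = (\col_i l (x i) w)^T.
  case: hM => _ [hsy _]; case: hx => _ hxx.
  by apply/matrixP => i j; rewrite !mxE hsy.
have hlv : lv_row l v x w = (col_mx (\col_i l (x i) w) (\row_j v j w)^T)^T.
  by rewrite tr_col_mx trmxK -hsym.
rewrite /g kernel_ext basis_ext hsym.
rewrite /S_mx kernel_ext basis_ext hsym in hU'.
have := aug_pred hU hU' (ker_sym hx) y.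
by move=> /= H; rewrite /pred_mean /pred_var hlv trmxK; exact: H.
Qed.

End Model.

Section Greedy.
Variables (R : realType) (d : nat) (Omega : 'rV[R]_d -> Prop).

Lemma step m (v : 'I_m -> 'rV[R]_d -> R) n (x : 'I_n -> 'rV[R]_d) :
  lin_indep_on Omega v -> (\rank (basis_mx v x) < m)%N ->
  exists w, Omega w /\ ~~ ((\row_j v j w) <= basis_mx v x)%MS.
Proof.
move=> hli hr; set V := basis_mx v x.
have hc : cokermx V != 0.
  apply/eqP => h0; have := mxrank_coker V; rewrite h0 mxrank0 => /esym/eqP.
  by rewrite subn_eq0 leqNgt hr.
have [j hj] : exists j, col j (cokermx V) != 0.
  have : ~~ [forall j, col j (cokermx V) == 0].
    apply: contra hc => /forallP h; apply/eqP/matrixP => i j.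
    by have := h j => /eqP/matrixP/(_ i 0); rewrite !mxE.
  by rewrite negb_forall => /existsP.
set c := col j (cokermx V).
have hVc : V *m c = 0.
  apply/matrixP => i i0; have := mulmx_coker V; move/matrixP/(_ i j).
  rewrite [LHS]mxE [RHS]mxE => h; rewrite [LHS]mxE [RHS]mxE.
  transitivity (\sum_j0 V i j0 * cokermx V j0 j); last exact: h.
  by apply: eq_bigr => k _; rewrite !mxE.
have [k hk] : exists k, c k 0 != 0.
  have : ~~ [forall k, c k 0 == 0].
    apply: contra hj => /forallP h; apply/eqP/matrixP => i i0.
    by rewrite ord1; apply/eqP; move: (h i); rewrite /c !mxE.
  by rewrite negb_forall => /existsP.
have nall : ~ (forall w, Omega w -> \sum_(i < m) c i 0 * v i w = 0).
  by move=> h; have := hli (fun i => c i 0) h k; apply/eqP.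
have [w hw0] := not_all_ex_not _ _ nall.
have [hw hs] := imply_to_and _ _ hw0.
exists w; split => //; apply/negP => /submxP [D hD].
apply: hs; have h0 : ((\row_j v j w) *m c) 0 0 = 0 by rewrite hD -mulmxA hVc mulmx0 mxE.
transitivity (((\row_j v j w) *m c) 0 0); last exact: h0.
rewrite [RHS]mxE; apply: eq_bigr => i _; by rewrite [(\row_j _) 0 i]mxE mulrC.
Qed.

Lemma grow mu (u : 'I_mu -> 'rV[R]_d -> R) m (v : 'I_m -> 'rV[R]_d -> R) :
  lin_indep_on Omega v -> forall k, (k <= m)%N ->
  forall n0 (x0 : 'I_n0 -> 'rV[R]_d), finite_subset Omega x0 -> \rank (basis_mx u x0) = mu ->
  exists n (x : 'I_n -> 'rV[R]_d),
    [/\ finite_subset Omega x, \rank (basis_mx u x) = mu & (k <= \rank (basis_mx v x))%N].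
Proof.
move=> hli; elim => [|k IH] hk n0 x0 hx0 hu0; first by exists n0, x0; split.
have [n [x [hx hu hkr]]] := IH (ltnW hk) n0 x0 hx0 hu0.
case: (ltnP k (\rank (basis_mx v x))) => [hlt|hle]; first by exists n, x; split.
have hrk : \rank (basis_mx v x) = k by apply/eqP; rewrite eqn_leq hle hkr.
have [w [hw hnot]] := step hli (leq_ltn_trans hle hk).
have hn : forall i, x i <> w.
  move=> i ei; move: hnot; rewrite -ei.
  have -> : \row_j v j (x i) = row i (basis_mx v x) by apply/matrixP => a b; rewrite !mxE.
  by rewrite row_sub.
exists (n + 1)%N, (ext x w); split.
- exact: ext_fs.
- by apply/eqP; rewrite eqn_leq rank_leq_col /= -{1}hu; apply: mxrankS;
    rewrite basis_ext -addsmxE addsmxSl.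
- rewrite basis_ext -addsmxE -hrk; apply: rank_ltmx.
  by rewrite ltmxE addsmxSl /= addsmx_sub submx_refl.
Qed.

End Greedy.

Lemma alpha_eq_of (R : realType) n (A B : 'M[R]_n) s2 : s2 != 0 ->
  1%:M - s2 *: A = 1%:M - s2 *: B -> A = B.
Proof.
move=> hs h; have h2 : s2 *: A = s2 *: B by apply: oppr_inj; apply: (addrI 1%:M).
by rewrite -[A]scale1r -[B]scale1r -(mulVf hs) -!scalerA h2.
Qed.

Unset Implicit Arguments.
Set Strict Implicit.

Theorem mainTheorem5 (R : realType) (d : nat) (Omega : 'rV[R]_d -> Prop)
  (m : nat) (l : 'rV[R]_d -> 'rV[R]_d -> R) (v : 'I_m -> 'rV[R]_d -> R)
  (m' : nat) (l' : 'rV[R]_d -> 'rV[R]_d -> R) (v' : 'I_m' -> 'rV[R]_d -> R) :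
  is_SPM Omega l v -> is_SPM Omega l' v' ->
  (pred_equiv Omega l v l' v' <->
   (forall n (x : 'I_n -> 'rV[R]_d), finite_subset Omega x ->
      unisolvent v x -> unisolvent v' x ->
      forall (Q : 'M[R]_(n, m)) (Q' : 'M[R]_(n, m')),
        orth_basis_of Q (basis_mx v x) -> orth_basis_of Q' (basis_mx v' x) ->
      forall s2 : R, 0 < s2 ->
        smoother Q (kernel_mx l x) s2 = smoother Q' (kernel_mx l' x) s2)).
Proof.
move=> hM hM'; split.
  case=> em H n x hx hu hu' Q Q' hQ hQ' s2 hs.
  subst m'.
  rewrite (smootherE hQ hu (model_psd hM hx hu hQ) hs).
  rewrite (smootherE hQ' hu' (model_psd hM' hx hu' hQ') hs).
  apply/matrixP => i j.
  rewrite -!(mul_delta_entry _ i j) -(pm_pt hM _ _ hx hu hs) -(pm_pt hM' _ _ hx hu' hs).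
  have hxi : Omega (x i) by case: hx.
  by case: (H n x hx hu hu' (x i) hxi (delta_mx j 0) s2 hs).
move=> H.
have hs1 : (0 : R) < 1 by [].
have key : forall n (x : 'I_n -> 'rV[R]_d), finite_subset Omega x ->
    unisolvent v x -> unisolvent v' x -> forall s2 : R, 0 < s2 ->
    alpha (kernel_mx l x) (basis_mx v x) s2 = alpha (kernel_mx l' x) (basis_mx v' x) s2
    /\ (exists Q : 'M[R]_(n, m), orth_basis_of Q (basis_mx v x))
    /\ (exists Q' : 'M[R]_(n, m'), orth_basis_of Q' (basis_mx v' x)).
  move=> n x hx hu hu' s2 hs.
  have [Q hQ] := model_Q hx hu; have [Q' hQ'] := model_Q hx hu'.
  split; last by split; [exists Q | exists Q'].
  have := H n x hx hu hu' Q Q' hQ hQ' s2 hs.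
  rewrite (smootherE hQ hu (model_psd hM hx hu hQ) hs).
  rewrite (smootherE hQ' hu' (model_psd hM' hx hu' hQ') hs).
  by apply: alpha_eq_of; rewrite gt_eqF.
have em : m = m'.
  case: (hM) => hli _; case: (hM') => hli' _.
  pose u0 := fun (i : 'I_0) (_ : 'rV[R]_d) => (0 : R).
  pose x00 := fun i : 'I_0 => (0 : 'rV[R]_d).
  have hx00 : finite_subset Omega x00 by split; case.
  have hr00 : \rank (basis_mx u0 x00) = 0%N by apply/eqP; rewrite -leqn0 rank_leq_row.
  have [n0 [x0 [hx0 _ hk0]]] := grow hli (leqnn m) hx00 hr00.
  have hu0 : unisolvent v x0 by apply/eqP; rewrite eqn_leq rank_leq_col hk0.
  have [n [x [hx hu hk]]] := grow hli' (leqnn m') hx0 hu0.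
  have hu' : unisolvent v' x by apply/eqP; rewrite eqn_leq rank_leq_col hk.
  have [ea [[Q hQ] [Q' hQ']]] := key n x hx hu hu' 1 hs1.
  have hp := model_psd hM hx hu hQ; have hp' := model_psd hM' hx hu' hQ'.
  have h1 : alpha (kernel_mx l x) (basis_mx v x) 1 *m basis_mx v' x = 0.
    by rewrite ea (alpha_V hQ' hu' hp' hs1).
  have h2 : alpha (kernel_mx l' x) (basis_mx v' x) 1 *m basis_mx v x = 0.
    by rewrite -ea (alpha_V hQ hu hp hs1).
  have s1 := mxrankS (alpha_ker hQ hu hp hs1 h1).
  have s2 := mxrankS (alpha_ker hQ' hu' hp' hs1 h2).
  rewrite !mxrank_tr hu hu' in s1 s2.
  by apply/eqP; rewrite eqn_leq s1 s2.
subst m'; split => // n x hx hu hu' w hw y s2 hs.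
have [ea _] := key n x hx hu hu' s2 hs.
case: (boolP [exists k, x k == w]) => [/existsP [k /eqP ek] | hne].
  subst w.
  by rewrite (pm_pt hM _ _ hx hu hs) (pm_pt hM' _ _ hx hu' hs)
    (pv_pt hM _ hx hu hs) (pv_pt hM' _ hx hu' hs) ea.
have hn : forall k, x k <> w.
  move=> k ek; move: hne; rewrite negb_exists => /forallP /(_ k).
  by rewrite ek eqxx.
have hx' := ext_fs hx hw hn.
have [ea' _] := key _ _ hx' (ext_fs_unis w hu) (ext_fs_unis w hu') s2 hs.
have [e1 e2] := pred_ext hM y hx hu hw hn hs.
have [e1' e2'] := pred_ext hM' y hx hu' hw hn hs.
by rewrite e1 e2 e1' e2' ea'.
Qed.
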